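(* Suppose there exist $r_0>0$ and $C>0$ with $C<\mu/(\epsilon^2\lambda)$ such that $|\nabla\ln T(\mathbf{x})|<C$ for all $|\mathbf{x}|>r_0$, and put $\tilde C=(\mu-\epsilon^2\lambda C)/(\epsilon^2\lambda)>0$. Then there exists $r_1>r_0$ such that $$\mathcal{G}_{\mathbf u}|\mathbf{x}|\le-\frac{\epsilon^2\tilde C}{2}<0\qquad\text{for all }\mathbf{x}\in\mathbb{R}^3\setminus N\text{ with }|\mathbf{x}|>r_1.$$
   Context: Standing setting: fix $\mu>0$, $\lambda>0$, $e\in(0,1)$, $\epsilon\in(0,1]$. For $\mathbf{x}=(x,y,z)\in\mathbb{R}^3$ let $\nu(\mathbf{x})=\frac{\mu}{\lambda^2}\big(|\mathbf{x}|-\frac{x}{e}-\frac{\mathrm{i}y\sqrt{1-e^2}}{e}\big)$, $\sqrt{\cdot}$ the principal branch of the complex square root, $N=\{0\}\cup\{\mathbf{x}:y=0,\ \nu(\mathbf{x})\in[0,4]\}$ (Lebesgue-null), and on $\mathbb{R}^3\setminus N$ $$R_\epsilon(\mathbf{x})=\frac{\lambda}{\epsilon^2}\Big[\ln|\nu|+2\ln\big|1+\sqrt{1-4/\nu}\big|-\frac{\mu|\mathbf{x}|}{\lambda^2}+\tfrac12\operatorname{Re}\big(\nu(1-\sqrt{1-4/\nu})\big)\Big].$$ Let $T\in C^2(\mathbb{R}^3;(0,\infty))$ with $\ln T$ bounded. Set $\rho_\epsilon=T\exp(2R_\epsilon)$, the osmotic velocity $\mathbf{u}=\frac{\epsilon^2}{2}\nabla\ln\rho_\epsilon$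 and $\mathcal{G}_{\mathbf u}=\frac{\epsilon^2}{2}\Delta+\mathbf{u}\cdot\nabla$. *)

(* Defs.v *)
From Stdlib Require Import Reals Lra.
Open Scope R_scope.

Definition R3 : Type := (R * R * R)%type.
Definition px (p : R3) : R := fst (fst p).
Definition py (p : R3) : R := snd (fst p).
Definition pz (p : R3) : R := snd p.

Definition vnorm (p : R3) : R := sqrt (px p ^ 2 + py p ^ 2 + pz p ^ 2).

(* x + t e_i  (i = 0,1,2; other indices leave x unchanged) *)
Definition upd (p : R3) (i : nat) (t : R) : R3 :=
  match i with
  | 0%nat => (px p + t, py p, pz p)
  | 1%nat => (px p, py p + t, pz p)
  | 2%nat => (px p, py p, pz p + t)
  | _ => p
  end.

Definition vsub (p q : R3) : R3 := (px p - px q, py p - py q, pz p - pz q).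

Definition is_partial (f : R3 -> R) (x : R3) (i : nat) (l : R) : Prop :=
  derivable_pt_lim (fun t => f (upd x i t)) 0 l.

Definition is_grad (f : R3 -> R) (x : R3) (g : R3) : Prop :=
  is_partial f x 0 (px g) /\ is_partial f x 1 (py g) /\ is_partial f x 2 (pz g).

Definition is_second_partial (f : R3 -> R) (x : R3) (i : nat) (l : R) : Prop :=
  exists delta, 0 < delta /\ exists f' : R -> R,
    (forall t, Rabs t < delta -> derivable_pt_lim (fun s => f (upd x i s)) t (f' t))
    /\ derivable_pt_lim f' 0 l.

Definition is_laplacian (f : R3 -> R) (x : R3) (l : R) : Prop :=
  exists a b c, is_second_partial f x 0 a /\ is_second_partial f x 1 b /\
    is_second_partial f x 2 c /\ l = a + b + c.

Definition cont3 (f : R3 -> R) : Prop :=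
  forall x eps, 0 < eps -> exists delta, 0 < delta /\
    forall y, vnorm (vsub y x) < delta -> Rabs (f y - f x) < eps.

Definition C2_3 (f : R3 -> R) : Prop :=
  exists (D : nat -> R3 -> R) (D2 : nat -> nat -> R3 -> R),
    cont3 f /\
    (forall i, (i < 3)%nat -> cont3 (D i) /\
       forall x, is_partial f x i (D i x)) /\
    (forall i j, (i < 3)%nat -> (j < 3)%nat -> cont3 (D2 i j) /\
       forall x, is_partial (D i) x j (D2 i j x)).

Definition Cx : Type := (R * R)%type.
Definition cre (z : Cx) : R := fst z.
Definition cim (z : Cx) : R := snd z.
Definition cadd (z w : Cx) : Cx := (cre z + cre w, cim z + cim w).
Definition csub (z w : Cx) : Cx := (cre z - cre w, cim z - cim w).
Definition cmul (z w : Cx) : Cx :=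
  (cre z * cre w - cim z * cim w, cre z * cim w + cim z * cre w).
Definition cmod (z : Cx) : R := sqrt (cre z ^ 2 + cim z ^ 2).
Definition cinv (z : Cx) : Cx :=
  (cre z / (cre z ^ 2 + cim z ^ 2), - cim z / (cre z ^ 2 + cim z ^ 2)).
Definition cdiv (z w : Cx) : Cx := cmul z (cinv w).
Definition creal (a : R) : Cx := (a, 0).
(* principal branch of the complex square root (branch cut on (-oo,0],
   with sqrt(-a) = i sqrt a for a > 0) *)
Definition csqrt (z : Cx) : Cx :=
  (sqrt ((cmod z + cre z) / 2),
   (if Rle_dec 0 (cim z) then 1 else -1) * sqrt ((cmod z - cre z) / 2)).

Definition nu (mu lam e : R) (p : R3) : Cx :=
  (mu / lam ^ 2 * (vnorm p - px p / e),
   - (mu / lam ^ 2 * (py p * sqrt (1 - e ^ 2) / e))).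

Definition inN (mu lam e : R) (p : R3) : Prop :=
  p = (0, 0, 0) \/
  (py p = 0 /\ cim (nu mu lam e p) = 0 /\
   0 <= cre (nu mu lam e p) <= 4).

Definition Reps (mu lam e eps : R) (p : R3) : R :=
  let v := nu mu lam e p in
  let w := csqrt (csub (creal 1) (cdiv (creal 4) v)) in
  lam / eps ^ 2 *
   (ln (cmod v) + 2 * ln (cmod (cadd (creal 1) w)) - mu * vnorm p / lam ^ 2
    + / 2 * cre (cmul v (csub (creal 1) w))).

Definition lnrho (mu lam e eps : R) (T : R3 -> R) (p : R3) : R :=
  ln (T p * exp (2 * Reps mu lam e eps p)).

(* G_u f (x) = eps^2/2 Lap f(x) + u(x) . grad f(x), u = eps^2/2 grad ln rho,
   given Lap f(x) = lap, grad f(x) = df, grad ln rho(x) = g *)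
Definition Gu_value (eps : R) (g df : R3) (lap : R) : R :=
  eps ^ 2 / 2 * lap +
  (eps ^ 2 / 2 * px g * px df + eps ^ 2 / 2 * py g * py df
   + eps ^ 2 / 2 * pz g * pz df).

(* Main.v *)
Require Import Defs.
From Stdlib Require Import Reals Lra Psatz Lia.
Open Scope R_scope.


Notation dpl := derivable_pt_lim.

Lemma dpl_eq f x l l' : dpl f x l -> l = l' -> dpl f x l'.
Proof. intros H ->; exact H. Qed.

Lemma dpl_local f g x l d : 0 < d -> (forall t, Rabs (t - x) < d -> f t = g t) ->
  dpl f x l -> dpl g x l.
Proof.
  intros Hd E H eps Heps. destruct (H eps Heps) as [del Hdel].
  assert (Hm : 0 < Rmin del d) by (apply Rmin_pos; [apply (cond_pos del)|lra]).
  exists (mkposreal _ Hm). intros h Hh0 Hh. simpl in Hh.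
  rewrite <- (E (x+h)), <- (E x).
  - apply Hdel; auto. eapply Rlt_le_trans; [exact Hh| apply Rmin_l].
  - rewrite Rminus_diag, Rabs_R0; lra.
  - replace (x + h - x) with h by ring. eapply Rlt_le_trans; [exact Hh| apply Rmin_r].
Qed.

Lemma dpl_ext f g x l : (forall t, f t = g t) -> dpl f x l -> dpl g x l.
Proof. intros E. apply (dpl_local f g x l 1); [lra|auto]. Qed.

Lemma dpl_const c x : dpl (fun _ => c) x 0.
Proof. apply derivable_pt_lim_const. Qed.
Lemma dpl_id x : dpl (fun t => t) x 1.
Proof. apply derivable_pt_lim_id. Qed.
Lemma dpl_plus f g x lf lg : dpl f x lf -> dpl g x lg -> dpl (fun t => f t + g t) x (lf + lg).
Proof. intros; apply (derivable_pt_lim_plus f g); auto. Qed.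
Lemma dpl_minus f g x lf lg : dpl f x lf -> dpl g x lg -> dpl (fun t => f t - g t) x (lf - lg).
Proof. intros; apply (derivable_pt_lim_minus f g); auto. Qed.
Lemma dpl_mult f g x lf lg : dpl f x lf -> dpl g x lg ->
  dpl (fun t => f t * g t) x (lf * g x + f x * lg).
Proof. intros; apply (derivable_pt_lim_mult f g); auto. Qed.
Lemma dpl_opp f x lf : dpl f x lf -> dpl (fun t => - f t) x (- lf).
Proof. intros; apply (derivable_pt_lim_opp f); auto. Qed.
Lemma dpl_div f g x lf lg : dpl f x lf -> dpl g x lg -> g x <> 0 ->
  dpl (fun t => f t / g t) x ((lf * g x - lg * f x) / (g x)²).
Proof. intros; apply (derivable_pt_lim_div f g); auto. Qed.
Lemma dpl_pow f x lf n : dpl f x lf -> dpl (fun t => f t ^ n) x (INR n * f x ^ pred n * lf).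
Proof. intros H. apply (derivable_pt_lim_comp f (fun y => y ^ n)); auto.
  apply derivable_pt_lim_pow. Qed.
Lemma dpl_sqrt f x lf : dpl f x lf -> 0 < f x -> dpl (fun t => sqrt (f t)) x (lf / (2 * sqrt (f x))).
Proof. intros H P. apply dpl_eq with (/ (2 * sqrt (f x)) * lf); [|unfold Rdiv; ring].
  apply (derivable_pt_lim_comp f sqrt); auto. apply derivable_pt_lim_sqrt; auto. Qed.
Lemma dpl_ln f x lf : dpl f x lf -> 0 < f x -> dpl (fun t => ln (f t)) x (lf / f x).
Proof. intros H P. apply dpl_eq with (/ f x * lf); [|unfold Rdiv; ring].
  apply (derivable_pt_lim_comp f ln); auto. apply derivable_pt_lim_ln; auto. Qed.
Lemma dpl_ln_sqrt f x lf : dpl f x lf -> 0 < f x -> dpl (fun t => ln (sqrt (f t))) x (lf / (2 * f x)).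
Proof. intros H P. eapply dpl_eq. apply dpl_ln. apply dpl_sqrt; [exact H|exact P]. apply sqrt_lt_R0; auto.
  assert (S: sqrt (f x) * sqrt (f x) = f x) by (apply sqrt_sqrt; lra).
  assert (0 < sqrt (f x)) by (apply sqrt_lt_R0; auto).
  replace (2 * f x) with (2 * (sqrt (f x) * sqrt (f x))) by (rewrite S; auto). field. lra. Qed.
Lemma dpl_inv f x lf : dpl f x lf -> f x <> 0 ->
  dpl (fun t => / f t) x (- lf / (f x)²).
Proof. intros H P. eapply dpl_ext. 2:{ eapply dpl_eq. apply (dpl_div (fun _ => 1) f x 0 lf).
  apply dpl_const. exact H. exact P. unfold Rdiv; ring. }
  intro; simpl. unfold Rdiv. ring. Qed.


Definition Phi (v : Cx) : R :=
  let w := csqrt (csub (creal 1) (cdiv (creal 4) v)) in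
  ln (cmod v) + 2 * ln (cmod (cadd (creal 1) w)) + / 2 * cre (cmul v (csub (creal 1) w)).

Lemma Reps_Phi mu lam e eps p :
  Reps mu lam e eps p = lam / eps ^ 2 * (Phi (nu mu lam e p) - mu * vnorm p / lam ^ 2).
Proof. unfold Reps, Phi. ring. Qed.

Lemma csqrt_im_eq x y :
  0 < sqrt ((sqrt (x^2+y^2) + x)/2) ->
  (if Rle_dec 0 y then 1 else -1) * sqrt ((sqrt (x^2+y^2) - x)/2)
  = y / (2 * sqrt ((sqrt (x^2+y^2) + x)/2)).
Proof.
  intros Hu.
  set (md := sqrt (x^2+y^2)) in *.
  assert (Hmd2 : md * md = x^2 + y^2) by (apply sqrt_sqrt; nra).
  assert (Hmd0 : 0 <= md) by apply sqrt_pos.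
  assert (Hmx : Rabs x <= md).
  { destruct (Rcase_abs x); [rewrite Rabs_left by lra|rewrite Rabs_right by lra]; nra. }
  assert (H1 : 0 <= (md + x)/2) by (destruct (Rcase_abs x); [rewrite Rabs_left in Hmx by lra|rewrite Rabs_right in Hmx by lra]; lra).
  assert (H2 : 0 <= (md - x)/2) by (destruct (Rcase_abs x); [rewrite Rabs_left in Hmx by lra|rewrite Rabs_right in Hmx by lra]; lra).
  set (u := sqrt ((md + x)/2)) in *. set (v := sqrt ((md - x)/2)).
  assert (Hu2 : u * u = (md+x)/2) by (apply sqrt_sqrt; auto).
  assert (Hv2 : v * v = (md-x)/2) by (apply sqrt_sqrt; auto).
  assert (Hv0 : 0 <= v) by apply sqrt_pos.
  assert (Huv : (2*u*v) * (2*u*v) = y * y).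
  { replace ((2*u*v) * (2*u*v)) with (4 * (u*u) * (v*v)) by ring. rewrite Hu2, Hv2. nra. }
  assert (Huv0 : 0 <= 2*u*v) by nra.
  destruct (Rle_dec 0 y).
  - assert (E: y = 2*u*v) by nra. rewrite E. field. lra.
  - assert (E: y = -(2*u*v)) by nra. rewrite E. field. lra.
Qed.

Lemma pos_near f x l : dpl f x l -> 0 < f x ->
  exists d, 0 < d /\ forall t, Rabs (t - x) < d -> 0 < f t.
Proof.
  intros H P.
  assert (Hc : continuity_pt f x).
  { apply derivable_continuous_pt. exists l. exact H. }
  destruct (Hc (f x) P) as [alp [Ha Hf]].
  exists alp; split; auto. intros t Ht.
  destruct (Req_dec t x) as [->|Hne]; auto.
  assert (Hd : dist R_met (f t) (f x) < f x).
  { apply Hf. split; [split; [exact I| auto]| exact Ht]. } simpl in Hd. unfold R_dist in Hd.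
  apply Rabs_def2 in Hd. lra.
Qed.


Ltac dchain := first [ eassumption | eapply dpl_const | eapply dpl_id | eapply dpl_plus | eapply dpl_minus
  | eapply dpl_pow | eapply dpl_div | eapply dpl_inv | eapply dpl_mult | eapply dpl_opp | eapply dpl_ln_sqrt
  | eapply dpl_sqrt | eapply dpl_ln ].

Ltac side M := cbv beta; first [lra | unfold M; lra].

Lemma key (a b : R -> R) t0 a' b' :
  dpl a t0 a' -> dpl b t0 b' -> 0 < a t0 ^ 2 + b t0 ^ 2 ->
  0 < cmod (csub (creal 1) (cdiv (creal 4) (a t0, b t0)))
      + cre (csub (creal 1) (cdiv (creal 4) (a t0, b t0))) ->
  dpl (fun t => Phi (a t, b t)) t0
   (((1 - cre (csqrt (csub (creal 1) (cdiv (creal 4) (a t0, b t0))))) * a'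
     + cim (csqrt (csub (creal 1) (cdiv (creal 4) (a t0, b t0)))) * b') / 2).
Proof.
  intros Ha Hb Hm Hz.
  pose (M := fun t => a t ^ 2 + b t ^ 2).
  pose (X := fun t => 1 - 4 * a t / M t).
  pose (Y := fun t => 4 * b t / M t).
  pose (Md := fun t => sqrt (X t ^ 2 + Y t ^ 2)).
  pose (P := fun t => sqrt ((Md t + X t) / 2)).
  pose (Q := fun t => cim (csqrt (csub (creal 1) (cdiv (creal 4) (a t, b t))))).
  assert (EX : forall t, cre (csub (creal 1) (cdiv (creal 4) (a t, b t))) = X t).
  { intro. unfold X, M. cbn. unfold Rdiv. ring. }
  assert (EY : forall t, cim (csub (creal 1) (cdiv (creal 4) (a t, b t))) = Y t).
  { intro. unfold Y, M. cbn. unfold Rdiv. ring. }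
  assert (EMd : forall t, cmod (csub (creal 1) (cdiv (creal 4) (a t, b t))) = Md t).
  { intro. unfold cmod. rewrite EX, EY. reflexivity. }
  assert (EP : forall t, cre (csqrt (csub (creal 1) (cdiv (creal 4) (a t, b t)))) = P t).
  { intro. unfold csqrt at 1. unfold cre at 1. cbn [fst]. rewrite EMd, EX. reflexivity. }
  assert (EQ : forall t, 0 < P t -> Q t = Y t / (2 * P t)).
  { intros t Pt. unfold Q, csqrt. unfold cim at 1. cbn [snd]. rewrite EMd, EX, EY.
    unfold P, Md in *. apply csqrt_im_eq. exact Pt. }
  assert (EPhi : forall t, ln (sqrt (M t)) + 2 * ln (sqrt ((1 + P t) ^ 2 + (0 + Q t) ^ 2))
     + / 2 * (a t * (1 - P t) - b t * (0 - Q t)) = Phi (a t, b t)).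
  { intro. unfold Phi. rewrite <- EP. unfold Q. reflexivity. }
  rewrite EP. fold (Q t0).
  rewrite EMd, EX in Hz.
  assert (HMd0 : 0 < Md t0).
  { assert (0 <= Md t0) by apply sqrt_pos.
    assert (Md t0 * Md t0 = X t0 ^ 2 + Y t0 ^ 2) by (apply sqrt_sqrt; nra). nra. }
  assert (HP0 : 0 < P t0) by (apply sqrt_lt_R0; lra).
  assert (HX2 : 0 < X t0 ^ 2 + Y t0 ^ 2).
  { assert (Md t0 * Md t0 = X t0 ^ 2 + Y t0 ^ 2) by (apply sqrt_sqrt; nra). nra. }
  evar (lM : R). assert (dM : dpl M t0 lM). { unfold M, lM. repeat dchain. }
  evar (lX : R). assert (dX : dpl X t0 lX). { unfold X, lX. repeat dchain. all: side M. }
  evar (lY : R). assert (dY : dpl Y t0 lY). { unfold Y, lY. repeat dchain. all: side M. }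
  evar (lMd : R). assert (dMd : dpl Md t0 lMd). { unfold Md, lMd. repeat dchain. all: side M. }
  evar (lP : R). assert (dP : dpl P t0 lP). { unfold P, lP. repeat dchain. all: side M. }
  destruct (pos_near P t0 lP dP HP0) as [d [Hd Hnear]].
  evar (lQ : R). assert (dQ : dpl Q t0 lQ).
  { apply (dpl_local (fun t => Y t / (2 * P t)) Q t0 lQ d Hd).
    intros t Ht. symmetry. apply EQ. auto. unfold lQ. repeat dchain. all: side M. }
  eapply dpl_ext. { intro t. exact (EPhi t). }
  eapply dpl_eq. { repeat dchain. all: try side M. nra. }
  subst lQ lP lMd lX lY lM. cbv beta.
  assert (F7 : sqrt (X t0 ^ 2 + Y t0 ^ 2) = Md t0) by reflexivity.
  assert (F8 : sqrt ((Md t0 + X t0) / 2) = P t0) by reflexivity.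
  assert (F1 : P t0 * P t0 = (Md t0 + X t0) / 2) by (apply sqrt_sqrt; lra).
  assert (F2 : Md t0 * Md t0 = X t0 ^ 2 + Y t0 ^ 2) by (apply sqrt_sqrt; lra).
  assert (F3 : Q t0 = Y t0 / (2 * P t0)) by (apply EQ; auto).
  assert (F4 : X t0 = 1 - 4 * a t0 / M t0) by reflexivity.
  assert (F5 : Y t0 = 4 * b t0 / M t0) by reflexivity.
  assert (F6 : M t0 = a t0 ^ 2 + b t0 ^ 2) by reflexivity.
  clearbody Q P Md Y X M.
  clear dQ dP dMd dY dX dM EPhi EQ EP EMd EY EX Hnear Ha Hb.
  set (a0 := a t0) in *. set (b0 := b t0) in *. set (q := Q t0) in *. set (p := P t0) in *.
  set (md := Md t0) in *. set (y0 := Y t0) in *. set (x0 := X t0) in *. set (m0 := M t0) in *.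
  clearbody a0 b0 q p md y0 x0 m0. rewrite F7, F8. clear F7 F8. simpl INR; simpl pred.
  assert (Hq2 : q * q = (md - x0) / 2).
  { rewrite F3. replace (y0 / (2 * p) * (y0 / (2 * p))) with (y0 ^ 2 / (4 * (p * p))) by (field; lra).
    rewrite F1. replace (y0 ^ 2) with (md * md - x0 ^ 2) by lra. field. lra. }
  assert (Hmd : md = p * p + q * q) by lra.
  assert (Hx : x0 = p * p - q * q) by lra.
  assert (Hy : y0 = 2 * p * q) by (rewrite F3; field; lra).
  assert (Hm0 : m0 <> 0) by (rewrite F6; lra).
  assert (Ha0 : a0 = 4 * (1 - x0) / ((1 - x0) ^ 2 + y0 ^ 2)).
  { rewrite F4, F5. rewrite F6 in *. field. split; auto. intro E. apply Hm0. nra. }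
  assert (Hb0 : b0 = 4 * y0 / ((1 - x0) ^ 2 + y0 ^ 2)).
  { rewrite F4, F5. rewrite F6 in *. field. split; auto. intro E. apply Hm0. nra. }
  assert (HD : (1 - x0) ^ 2 + y0 ^ 2 <> 0).
  { rewrite F4, F5. rewrite F6 in *.
    replace ((1 - (1 - 4 * a0 / (a0 ^ 2 + b0 ^ 2))) ^ 2 + (4 * b0 / (a0 ^ 2 + b0 ^ 2)) ^ 2)
      with (16 / (a0 ^ 2 + b0 ^ 2)) by (field; auto).
    apply Rgt_not_eq. apply Rdiv_lt_0_compat; lra. }
  rewrite F6. clear F6 F4 F5 F1 F2 F3 Hq2 HX2 Hm0 Hm.
  rewrite Ha0, Hb0. rewrite Hmd, Hx, Hy in *. clear Ha0 Hb0 Hmd Hx Hy.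
  unfold Rsqr. field. split; [exact HD|]. split.
  { replace ((4 * (1 - (p * p - q * q))) ^ 2 + (4 * (2 * p * q)) ^ 2)
      with (16 * ((1 - (p * p - q * q)) ^ 2 + (2 * p * q) ^ 2)) by ring.
    apply Rmult_integral_contrapositive; split; [lra|exact HD]. }
  split; [lra|]. split; [lra|]. nra.
Qed.


Lemma csqrt_bound a0 b0 :
  0 < a0 ^ 2 + b0 ^ 2 ->
  0 < cmod (csub (creal 1) (cdiv (creal 4) (a0, b0)))
      + cre (csub (creal 1) (cdiv (creal 4) (a0, b0))) ->
  (1 - cre (csqrt (csub (creal 1) (cdiv (creal 4) (a0, b0))))) * a0
   + cim (csqrt (csub (creal 1) (cdiv (creal 4) (a0, b0)))) * b0 <= 4.
Proof.
  intros Hm Hz.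
  set (m0 := a0 ^ 2 + b0 ^ 2) in *.
  set (x0 := 1 - 4 * a0 / m0). set (y0 := 4 * b0 / m0).
  assert (EX : cre (csub (creal 1) (cdiv (creal 4) (a0, b0))) = x0).
  { unfold x0, m0. cbn. unfold Rdiv. ring. }
  assert (EY : cim (csub (creal 1) (cdiv (creal 4) (a0, b0))) = y0).
  { unfold y0, m0. cbn. unfold Rdiv. ring. }
  set (md := sqrt (x0 ^ 2 + y0 ^ 2)).
  assert (EMd : cmod (csub (creal 1) (cdiv (creal 4) (a0, b0))) = md).
  { unfold cmod. rewrite EX, EY. reflexivity. }
  set (p := sqrt ((md + x0) / 2)).
  assert (EP : cre (csqrt (csub (creal 1) (cdiv (creal 4) (a0, b0)))) = p).
  { unfold csqrt at 1. unfold cre at 1. cbn [fst]. rewrite EMd, EX. reflexivity. }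
  rewrite EMd, EX in Hz.
  assert (HMd0 : 0 < md).
  { assert (0 <= md) by apply sqrt_pos.
    assert (md * md = x0 ^ 2 + y0 ^ 2) by (apply sqrt_sqrt; nra). nra. }
  assert (HP0 : 0 < p) by (apply sqrt_lt_R0; lra).
  assert (EQ : cim (csqrt (csub (creal 1) (cdiv (creal 4) (a0, b0)))) = y0 / (2 * p)).
  { unfold csqrt. unfold cim at 1. cbn [snd]. rewrite EMd, EX, EY.
    unfold p, md in *. apply csqrt_im_eq. exact HP0. }
  rewrite EP, EQ. set (q := y0 / (2 * p)).
  assert (F1 : p * p = (md + x0) / 2) by (apply sqrt_sqrt; lra).
  assert (F2 : md * md = x0 ^ 2 + y0 ^ 2) by (apply sqrt_sqrt; nra).
  assert (F3 : q = y0 / (2 * p)) by reflexivity.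
  assert (F4 : x0 = 1 - 4 * a0 / m0) by reflexivity.
  assert (F5 : y0 = 4 * b0 / m0) by reflexivity.
  assert (F6 : m0 = a0 ^ 2 + b0 ^ 2) by reflexivity.
  clearbody q p md x0 y0 m0.
  assert (Hq2 : q * q = (md - x0) / 2).
  { rewrite F3. replace (y0 / (2 * p) * (y0 / (2 * p))) with (y0 ^ 2 / (4 * (p * p))) by (field; lra).
    rewrite F1. replace (y0 ^ 2) with (md * md - x0 ^ 2) by lra. field. lra. }
  assert (Hmd : md = p * p + q * q) by lra.
  assert (Hx : x0 = p * p - q * q) by lra.
  assert (Hy : y0 = 2 * p * q) by (rewrite F3; field; lra).
  assert (Hm0 : m0 <> 0) by lra.
  assert (Ha0 : a0 = 4 * (1 - x0) / ((1 - x0) ^ 2 + y0 ^ 2)).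
  { rewrite F4, F5. rewrite F6 in *. field. split; auto. intro E. apply Hm0. nra. }
  assert (Hb0 : b0 = 4 * y0 / ((1 - x0) ^ 2 + y0 ^ 2)).
  { rewrite F4, F5. rewrite F6 in *. field. split; auto. intro E. apply Hm0. nra. }
  assert (HD : (1 - x0) ^ 2 + y0 ^ 2 <> 0).
  { rewrite F4, F5. rewrite F6 in *.
    replace ((1 - (1 - 4 * a0 / (a0 ^ 2 + b0 ^ 2))) ^ 2 + (4 * b0 / (a0 ^ 2 + b0 ^ 2)) ^ 2)
      with (16 / (a0 ^ 2 + b0 ^ 2)) by (field; auto).
    apply Rgt_not_eq. apply Rdiv_lt_0_compat; lra. }
  rewrite Ha0, Hb0. rewrite Hx, Hy in *.
  assert (HS : 0 < (1 + p) ^ 2 + q ^ 2) by nra.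
  replace ((1 - p) * (4 * (1 - (p * p - q * q)) / ((1 - (p * p - q * q)) ^ 2 + (2 * p * q) ^ 2)) +
     q * (4 * (2 * p * q) / ((1 - (p * p - q * q)) ^ 2 + (2 * p * q) ^ 2)))
    with (4 * (1 + p) / ((1 + p) ^ 2 + q ^ 2)).
  2:{ field. split; [exact HD| lra]. }
  apply Rmult_le_reg_r with ((1 + p) ^ 2 + q ^ 2); auto.
  unfold Rdiv. rewrite Rmult_assoc, Rinv_l by lra. nra.
Qed.




Definition coord (i : nat) (p : R3) : R :=
  match i with 0%nat => px p | 1%nat => py p | _ => pz p end.
Definition dpx (i : nat) : R := match i with 0%nat => 1 | _ => 0 end.
Definition dpy (i : nat) : R := match i with 1%nat => 1 | _ => 0 end.

Lemma upd0 x i : (i < 3)%nat -> upd x i 0 = x.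
Proof.
  intros Hi. destruct x as [[x1 x2] x3].
  destruct i as [|[|[|i]]]; [| | |lia]; unfold upd, px, py, pz; simpl; rewrite Rplus_0_r; reflexivity.
Qed.

Lemma vnorm_sq x : vnorm x * vnorm x = px x ^ 2 + py x ^ 2 + pz x ^ 2.
Proof. unfold vnorm. apply sqrt_sqrt. nra. Qed.

Lemma vnorm_pos x : 0 <= vnorm x.
Proof. apply sqrt_pos. Qed.

Lemma vnorm_upd_sq x i t : (i < 3)%nat ->
  vnorm (upd x i t) * vnorm (upd x i t)
  = vnorm x * vnorm x + 2 * coord i x * t + t * t.
Proof.
  intros Hi. rewrite !vnorm_sq.
  destruct i as [|[|[|i]]]; [| | |lia]; unfold upd, coord; cbn [px py pz fst snd]; ring.
Qed.

Lemma vnorm_upd_eq x i s : (i < 3)%nat ->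
  vnorm (upd x i s) = sqrt (px x ^ 2 + py x ^ 2 + pz x ^ 2 + 2 * coord i x * s + s * s).
Proof.
  intros Hi. unfold vnorm at 1. f_equal.
  destruct i as [|[|[|i]]]; [| | |lia]; unfold upd, coord; cbn [px py pz fst snd]; ring.
Qed.

Lemma vnorm_partial_t x i t : (i < 3)%nat -> 0 < vnorm (upd x i t) ->
  dpl (fun s => vnorm (upd x i s)) t ((coord i x + t) / vnorm (upd x i t)).
Proof.
  intros Hi Hp.
  eapply dpl_ext. { intro s. symmetry. apply vnorm_upd_eq. exact Hi. }
  rewrite (vnorm_upd_eq x i t Hi) in *.
  eapply dpl_eq. { repeat dchain. cbv beta.
    destruct (Rle_lt_dec (px x ^ 2 + py x ^ 2 + pz x ^ 2 + 2 * coord i x * t + t * t) 0) as [Hn|]; auto.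
    rewrite sqrt_neg_0 in Hp; lra. }
  cbv beta. field. lra.
Qed.

Lemma vnorm_partial x i : (i < 3)%nat -> 0 < vnorm x ->
  dpl (fun s => vnorm (upd x i s)) 0 (coord i x / vnorm x).
Proof.
  intros Hi Hp. eapply dpl_eq. apply vnorm_partial_t; auto. rewrite upd0; auto.
  rewrite upd0; auto. rewrite Rplus_0_r. reflexivity.
Qed.

Definition d2v x i := (vnorm x * vnorm x - coord i x ^ 2) / (vnorm x ^ 3).

Lemma vnorm_near x i : (i < 3)%nat -> 0 < vnorm x ->
  exists d, 0 < d /\ forall t, Rabs (t - 0) < d -> 0 < vnorm (upd x i t).
Proof.
  intros Hi Hp. apply (pos_near _ 0 _ (vnorm_partial x i Hi Hp)). rewrite upd0; auto.
Qed.

Lemma vnorm_F'_deriv x i : (i < 3)%nat -> 0 < vnorm x ->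
  dpl (fun t => (coord i x + t) / vnorm (upd x i t)) 0 (d2v x i).
Proof.
  intros Hi Hp. eapply dpl_eq.
  { apply dpl_div. apply dpl_plus. apply dpl_const. apply dpl_id.
    apply vnorm_partial. auto. auto. cbv beta. rewrite upd0; auto. lra. }
  cbv beta. rewrite upd0; auto. unfold d2v. unfold Rsqr. field. lra.
Qed.

Lemma vnorm_second x i : (i < 3)%nat -> 0 < vnorm x ->
  is_second_partial vnorm x i (d2v x i).
Proof.
  intros Hi Hp. destruct (vnorm_near x i Hi Hp) as [d [Hd Hn]].
  exists d. split; auto. exists (fun t => (coord i x + t) / vnorm (upd x i t)). split.
  - intros t Ht. apply vnorm_partial_t; auto. apply Hn. rewrite Rminus_0_r; auto.
  - apply vnorm_F'_deriv; auto.
Qed.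

Lemma vnorm_second_uniq x i l : (i < 3)%nat -> 0 < vnorm x ->
  is_second_partial vnorm x i l -> l = d2v x i.
Proof.
  intros Hi Hp [d1 [Hd1 [f' [Hf1 Hf2]]]].
  destruct (vnorm_near x i Hi Hp) as [d [Hd Hn]].
  apply (uniqueness_limite (fun t => (coord i x + t) / vnorm (upd x i t)) 0).
  2: apply vnorm_F'_deriv; auto.
  apply (dpl_local f' _ 0 l (Rmin d d1)); auto.
  { apply Rmin_pos; auto. }
  intros t Ht. apply (uniqueness_limite (fun s => vnorm (upd x i s)) t).
  - apply Hf1. rewrite Rminus_0_r in Ht. eapply Rlt_le_trans; [exact Ht|apply Rmin_r].
  - apply vnorm_partial_t; auto. apply Hn. eapply Rlt_le_trans; [exact Ht|apply Rmin_l].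
Qed.

Lemma vnorm_lap x : 0 < vnorm x -> is_laplacian vnorm x (2 / vnorm x).
Proof.
  intros Hp. exists (d2v x 0), (d2v x 1), (d2v x 2).
  split; [apply vnorm_second; auto|]. split; [apply vnorm_second; auto|].
  split; [apply vnorm_second; auto|].
  unfold d2v, coord. assert (S := vnorm_sq x).
  replace (px x ^ 2) with (vnorm x * vnorm x - py x ^ 2 - pz x ^ 2) by lra.
  field. lra.
Qed.

Lemma vnorm_lap_uniq x l : 0 < vnorm x -> is_laplacian vnorm x l -> l = 2 / vnorm x.
Proof.
  intros Hp [a [b [c [Ha [Hb [Hc ->]]]]]].
  apply vnorm_second_uniq in Ha; auto. apply vnorm_second_uniq in Hb; auto.
  apply vnorm_second_uniq in Hc; auto. subst.
  destruct (vnorm_lap x Hp) as [a [b [c [Ha [Hb [Hc E]]]]]].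
  apply vnorm_second_uniq in Ha; auto. apply vnorm_second_uniq in Hb; auto.
  apply vnorm_second_uniq in Hc; auto. subst. auto.
Qed.

Lemma vnorm_grad x : 0 < vnorm x ->
  is_grad vnorm x (px x / vnorm x, py x / vnorm x, pz x / vnorm x).
Proof.
  intros Hp. split; [|split].
  - apply (vnorm_partial x 0); auto.
  - apply (vnorm_partial x 1); auto.
  - apply (vnorm_partial x 2); auto.
Qed.

Lemma vnorm_grad_uniq x g : 0 < vnorm x -> is_grad vnorm x g ->
  g = (px x / vnorm x, py x / vnorm x, pz x / vnorm x).
Proof.
  intros Hp [H0 [H1 H2]].
  apply (uniqueness_limite _ _ _ _ (vnorm_partial x 0 ltac:(lia) Hp)) in H0.
  apply (uniqueness_limite _ _ _ _ (vnorm_partial x 1 ltac:(lia) Hp)) in H1.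
  apply (uniqueness_limite _ _ _ _ (vnorm_partial x 2 ltac:(lia) Hp)) in H2.
  destruct g as [[g0 g1] g2]. unfold px, py, pz in *; simpl in *. subst. reflexivity.
Qed.


Definition nA mu lam e x i t := mu / lam ^ 2 * (vnorm (upd x i t) - px (upd x i t) / e).
Definition nB mu lam e x i t := - (mu / lam ^ 2 * (py (upd x i t) * sqrt (1 - e ^ 2) / e)).
Definition W mu lam e x := csqrt (csub (creal 1) (cdiv (creal 4) (nu mu lam e x))).
Definition dA mu lam e x i := mu / lam ^ 2 * (coord i x / vnorm x - dpx i / e).
Definition dB mu lam e (i : nat) := - (mu / lam ^ 2 * (dpy i * sqrt (1 - e ^ 2) / e)).
Definition Kv mu lam e x i :=
  (1 - cre (W mu lam e x)) * dA mu lam e x i + cim (W mu lam e x) * dB mu lam e i.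

Lemma px_partial x i : (i < 3)%nat -> dpl (fun t => px (upd x i t)) 0 (dpx i).
Proof.
  intros Hi. destruct i as [|[|[|i]]]; [| | |lia]; unfold upd, dpx; cbn [px py pz fst snd];
  first [ apply dpl_const | eapply dpl_eq; [apply dpl_plus; [apply dpl_const|apply dpl_id]|ring] ].
Qed.

Lemma py_partial x i : (i < 3)%nat -> dpl (fun t => py (upd x i t)) 0 (dpy i).
Proof.
  intros Hi. destruct i as [|[|[|i]]]; [| | |lia]; unfold upd, dpy; cbn [px py pz fst snd];
  first [ apply dpl_const | eapply dpl_eq; [apply dpl_plus; [apply dpl_const|apply dpl_id]|ring] ].
Qed.

Lemma nA_partial mu lam e x i : (i < 3)%nat -> 0 < vnorm x -> 0 < lam -> 0 < e ->
  dpl (nA mu lam e x i) 0 (dA mu lam e x i).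
Proof.
  intros Hi Hp Hl He. unfold nA, dA. eapply dpl_eq.
  { apply dpl_mult. apply dpl_const. apply dpl_minus. apply vnorm_partial; auto.
    apply dpl_div. apply px_partial; auto. apply dpl_const. cbv beta. lra. }
  cbv beta. rewrite upd0 by auto. unfold Rsqr. field. lra.
Qed.

Lemma nB_partial mu lam e x i : (i < 3)%nat -> 0 < lam -> 0 < e ->
  dpl (nB mu lam e x i) 0 (dB mu lam e i).
Proof.
  intros Hi Hl He. unfold nB, dB. eapply dpl_eq.
  { apply dpl_opp. apply dpl_mult. apply dpl_const. apply dpl_div. apply dpl_mult.
    apply py_partial; auto. apply dpl_const. apply dpl_const. cbv beta. lra. }
  cbv beta. rewrite upd0 by auto. unfold Rsqr. field. lra.
Qed.

Lemma zre a0 b0 : cre (csub (creal 1) (cdiv (creal 4) (a0, b0))) = 1 - 4 * a0 / (a0 ^ 2 + b0 ^ 2).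
Proof. cbn. unfold Rdiv. ring. Qed.
Lemma zim a0 b0 : cim (csub (creal 1) (cdiv (creal 4) (a0, b0))) = 4 * b0 / (a0 ^ 2 + b0 ^ 2).
Proof. cbn. unfold Rdiv. ring. Qed.

Lemma notN_cond mu lam e x : 0 < mu -> 0 < lam -> 0 < e < 1 -> ~ inN mu lam e x ->
  0 < cre (nu mu lam e x) ^ 2 + cim (nu mu lam e x) ^ 2 /\
  0 < cmod (csub (creal 1) (cdiv (creal 4) (nu mu lam e x)))
      + cre (csub (creal 1) (cdiv (creal 4) (nu mu lam e x))).
Proof.
  intros Hmu Hl He HN.
  assert (Hs : 0 < sqrt (1 - e ^ 2)) by (apply sqrt_lt_R0; nra).
  assert (Hk : 0 < mu / lam ^ 2) by (apply Rdiv_lt_0_compat; nra).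
  assert (Hb0 : cim (nu mu lam e x) = 0 -> py x = 0).
  { unfold nu, cim; cbn [snd]. intro E.
    assert (E2 : mu / lam ^ 2 * (sqrt (1 - e ^ 2) / e) * py x = 0).
    { replace (mu / lam ^ 2 * (sqrt (1 - e ^ 2) / e) * py x) with (- - (mu / lam ^ 2 * (py x * sqrt (1 - e ^ 2) / e))) by (field; lra). rewrite E. ring. }
    apply Rmult_integral in E2. destruct E2 as [E2|]; auto.
    exfalso. assert (0 < mu / lam ^ 2 * (sqrt (1 - e ^ 2) / e)).
    { apply Rmult_lt_0_compat; auto. apply Rdiv_lt_0_compat; lra. } lra. }
  change (nu mu lam e x) with (cre (nu mu lam e x), cim (nu mu lam e x)).
  set (a := cre (nu mu lam e x)) in *. set (b := cim (nu mu lam e x)) in *.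
  assert (Hm : 0 < a ^ 2 + b ^ 2).
  { destruct (Rle_lt_dec (a ^ 2 + b ^ 2) 0) as [H|H]; auto. exfalso. apply HN.
    right. assert (a = 0) by nra. assert (b = 0) by nra. split; [apply Hb0; auto|].
    split; [auto|]. unfold a in *. lra. }
  split; auto.
  unfold cmod. rewrite zre, zim.
  set (X := 1 - 4 * a / (a ^ 2 + b ^ 2)). set (Y := 4 * b / (a ^ 2 + b ^ 2)).
  assert (HM0 : 0 <= sqrt (X ^ 2 + Y ^ 2)) by apply sqrt_pos.
  assert (HM2 : sqrt (X ^ 2 + Y ^ 2) * sqrt (X ^ 2 + Y ^ 2) = X ^ 2 + Y ^ 2) by (apply sqrt_sqrt; nra).
  destruct (Rle_lt_dec (sqrt (X ^ 2 + Y ^ 2) + X) 0) as [H|H]; auto. exfalso.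
  assert (HY : Y = 0) by nra.
  assert (Hb : b = 0).
  { assert (E : 4 * b = Y * (a ^ 2 + b ^ 2)) by (unfold Y; field; lra). rewrite HY in E. lra. }
  assert (HX : X <= 0) by nra.
  apply HN. right. fold a b. split; [apply Hb0; auto|]. split; [auto|].
  unfold X in HX. rewrite Hb in HX, Hm.
  replace (4 * a / (a ^ 2 + 0 ^ 2)) with (4 / a) in HX by (field; nra).
  assert (Ha : a <> 0) by nra.
  destruct (Rlt_le_dec a 0) as [Hn|Hn].
  - assert (4 / a < 0) by (unfold Rdiv; apply Rmult_pos_neg; [lra|apply Rinv_neg; lra]). lra.
  - assert (0 < a) by lra. split; [lra|].
    assert (1 <= 4 / a) by lra.
    apply Rmult_le_compat_l with (r := a) in H1; [|lra].
    replace (a * (4 / a)) with 4 in H1 by (field; lra). lra.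
Qed.

Lemma Phi_partial mu lam e x i : (i < 3)%nat -> 0 < vnorm x -> 0 < mu -> 0 < lam -> 0 < e < 1 ->
  ~ inN mu lam e x ->
  dpl (fun t => Phi (nA mu lam e x i t, nB mu lam e x i t)) 0 (Kv mu lam e x i / 2).
Proof.
  intros Hi Hp Hmu Hl He HN.
  destruct (notN_cond mu lam e x Hmu Hl He HN) as [C1 C2].
  eapply dpl_eq.
  { apply key. apply nA_partial; auto; lra. apply nB_partial; auto; lra.
    - change (nA mu lam e x i 0) with (cre (nu mu lam e (upd x i 0))).
      change (nB mu lam e x i 0) with (cim (nu mu lam e (upd x i 0))).
      rewrite upd0; auto.
    - change (nA mu lam e x i 0, nB mu lam e x i 0) with (nu mu lam e (upd x i 0)).
      rewrite upd0; auto. }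
  change (nA mu lam e x i 0, nB mu lam e x i 0) with (nu mu lam e (upd x i 0)).
  rewrite upd0 by auto. unfold Kv, W. reflexivity.
Qed.

Lemma lnrho_partial mu lam e eps T x i l : (i < 3)%nat -> 0 < vnorm x -> 0 < mu -> 0 < lam -> 0 < e < 1 ->
  ~ inN mu lam e x -> (forall y, 0 < T y) -> 0 < eps ->
  is_partial T x i l ->
  is_partial (lnrho mu lam e eps T) x i
    (l / T x + 2 * (lam / eps ^ 2 * (Kv mu lam e x i / 2 - mu * (coord i x / vnorm x) / lam ^ 2))).
Proof.
  intros Hi Hp Hmu Hl He HN HT Heps HTp. unfold is_partial in *.
  apply (dpl_ext (fun t => ln (T (upd x i t)) + 2 * (lam / eps ^ 2 *
     (Phi (nA mu lam e x i t, nB mu lam e x i t) - mu * vnorm (upd x i t) / lam ^ 2)))).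
  { intro t. unfold lnrho. rewrite ln_mult by (auto; apply exp_pos). rewrite ln_exp, Reps_Phi. reflexivity. }
  assert (dK := Phi_partial mu lam e x i Hi Hp Hmu Hl He HN).
  assert (dV := vnorm_partial x i Hi Hp).
  eapply dpl_eq.
  { apply dpl_plus. apply dpl_ln. exact HTp. apply HT.
    apply dpl_mult. apply dpl_const. apply dpl_mult. apply dpl_const. apply dpl_minus. exact dK.
    apply dpl_div. apply dpl_mult. apply dpl_const. exact dV. apply dpl_const. cbv beta. nra. }
  cbv beta. rewrite upd0 by auto. unfold Rsqr. field. assert (T x > 0) by apply HT. repeat split; lra.
Qed.

Lemma lnT_partial (T : R3 -> R) x i l : (i < 3)%nat -> (forall y, 0 < T y) ->
  is_partial T x i l -> is_partial (fun y => ln (T y)) x i (l / T x).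
Proof.
  intros Hi HT H. unfold is_partial in *. eapply dpl_eq. apply dpl_ln. exact H. apply HT.
  cbv beta. rewrite upd0 by auto. reflexivity.
Qed.

Lemma CS u0 u1 u2 w0 w1 w2 :
  u0 * w0 + u1 * w1 + u2 * w2 <= sqrt (u0 ^ 2 + u1 ^ 2 + u2 ^ 2) * sqrt (w0 ^ 2 + w1 ^ 2 + w2 ^ 2).
Proof.
  set (nu' := sqrt (u0 ^ 2 + u1 ^ 2 + u2 ^ 2)). set (nw := sqrt (w0 ^ 2 + w1 ^ 2 + w2 ^ 2)).
  assert (H1 : nu' * nu' = u0 ^ 2 + u1 ^ 2 + u2 ^ 2) by (apply sqrt_sqrt; nra).
  assert (H2 : nw * nw = w0 ^ 2 + w1 ^ 2 + w2 ^ 2) by (apply sqrt_sqrt; nra).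
  assert (H3 : 0 <= nu') by apply sqrt_pos. assert (H4 : 0 <= nw) by apply sqrt_pos.
  assert (L : (u0 * w0 + u1 * w1 + u2 * w2) ^ 2 <= (nu' * nw) ^ 2).
  { replace ((nu' * nw) ^ 2) with ((nu' * nu') * (nw * nw)) by ring. rewrite H1, H2.
    assert (E : (u0 ^ 2 + u1 ^ 2 + u2 ^ 2) * (w0 ^ 2 + w1 ^ 2 + w2 ^ 2) - (u0 * w0 + u1 * w1 + u2 * w2) ^ 2
      = (u0*w1-u1*w0)^2 + (u0*w2-u2*w0)^2 + (u1*w2-u2*w1)^2) by ring.
    assert (0 <= (u0*w1-u1*w0)^2 + (u0*w2-u2*w0)^2 + (u1*w2-u2*w1)^2) by
      (apply Rplus_le_le_0_compat; [apply Rplus_le_le_0_compat|]; apply pow2_ge_0).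
    lra. }
  destruct (Rle_lt_dec (u0 * w0 + u1 * w1 + u2 * w2) (nu' * nw)) as [|Hc]; auto.
  assert (0 <= nu' * nw) by nra. nra.
Qed.

Lemma sum_dA mu lam e x : 0 < vnorm x -> 0 < e -> 0 < lam ->
  coord 0 x * dA mu lam e x 0 + coord 1 x * dA mu lam e x 1 + coord 2 x * dA mu lam e x 2
  = cre (nu mu lam e x).
Proof.
  intros Hp He Hl. unfold dA, coord, dpx, nu, cre. cbn [fst].
  assert (S := vnorm_sq x).
  transitivity (mu / lam ^ 2 * ((px x ^ 2 + py x ^ 2 + pz x ^ 2) / vnorm x - px x / e)).
  { field. repeat split; lra. }
  rewrite <- S. field. repeat split; lra.
Qed.

Lemma sum_dB mu lam e x :
  coord 0 x * dB mu lam e 0 + coord 1 x * dB mu lam e 1 + coord 2 x * dB mu lam e 2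
  = cim (nu mu lam e x).
Proof. unfold dB, coord, dpy, nu, cim. cbn [fst snd]. unfold Rdiv. ring. Qed.

Lemma sum_Kv mu lam e x : 0 < vnorm x -> 0 < mu -> 0 < lam -> 0 < e < 1 -> ~ inN mu lam e x ->
  coord 0 x * Kv mu lam e x 0 + coord 1 x * Kv mu lam e x 1 + coord 2 x * Kv mu lam e x 2 <= 4.
Proof.
  intros Hp Hmu Hl He HN.
  destruct (notN_cond mu lam e x Hmu Hl He HN) as [C1 C2].
  unfold Kv.
  replace (coord 0 x * ((1 - cre (W mu lam e x)) * dA mu lam e x 0 + cim (W mu lam e x) * dB mu lam e 0) +
    coord 1 x * ((1 - cre (W mu lam e x)) * dA mu lam e x 1 + cim (W mu lam e x) * dB mu lam e 1) +
    coord 2 x * ((1 - cre (W mu lam e x)) * dA mu lam e x 2 + cim (W mu lam e x) * dB mu lam e 2))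
   with ((1 - cre (W mu lam e x)) * (coord 0 x * dA mu lam e x 0 + coord 1 x * dA mu lam e x 1 + coord 2 x * dA mu lam e x 2)
     + cim (W mu lam e x) * (coord 0 x * dB mu lam e 0 + coord 1 x * dB mu lam e 1 + coord 2 x * dB mu lam e 2)) by ring.
  rewrite sum_dA, sum_dB by lra. unfold W.
  apply (csqrt_bound (cre (nu mu lam e x)) (cim (nu mu lam e x))); auto.
Qed.


Theorem lemma7p3
  (mu lam e eps : R) (T : R3 -> R) (r0 C : R)
  (Hmu : 0 < mu) (Hlam : 0 < lam) (He : 0 < e < 1) (Heps : 0 < eps <= 1)
  (HTpos : forall x, 0 < T x) (HT2 : C2_3 T)
  (HlnTb : exists M, forall x, Rabs (ln (T x)) <= M)
  (Hr0 : 0 < r0) (HC : 0 < C) (HCb : C < mu / (eps ^ 2 * lam))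
  (Hgrad : forall x g, vnorm x > r0 -> is_grad (fun y => ln (T y)) x g -> vnorm g < C) :
  let Ct := (mu - eps ^ 2 * lam * C) / (eps ^ 2 * lam) in
  exists r1, r1 > r0 /\
    forall x, ~ inN mu lam e x -> vnorm x > r1 ->
      (exists g df lap, is_grad (lnrho mu lam e eps T) x g /\ is_grad vnorm x df
                        /\ is_laplacian vnorm x lap) /\
      (forall g df lap, is_grad (lnrho mu lam e eps T) x g -> is_grad vnorm x df ->
         is_laplacian vnorm x lap ->
         Gu_value eps g df lap <= - (eps ^ 2 * Ct / 2) /\ - (eps ^ 2 * Ct / 2) < 0).
Proof.
  intros Ct.
  destruct HT2 as [D [D2 [_ [HD _]]]].
  assert (HDi : forall i x, (i < 3)%nat -> is_partial T x i (D i x)).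
  { intros i x Hi. apply (HD i Hi). }
  assert (Heps2 : 0 < eps ^ 2) by nra.
  assert (HK : 0 < 2 * lam * (eps ^ 2 + 2 * lam) / mu).
  { apply Rdiv_lt_0_compat; nra. }
  exists (r0 + 2 * lam * (eps ^ 2 + 2 * lam) / mu + 1). split; [lra|].
  intros x HN Hx.
  assert (Hp : 0 < vnorm x) by lra.
  set (V := vnorm x) in *.
  pose (gi := fun i => D i x / T x + 2 * (lam / eps ^ 2 * (Kv mu lam e x i / 2 - mu * (coord i x / V) / lam ^ 2))).
  assert (Hgi : forall i, (i < 3)%nat -> is_partial (lnrho mu lam e eps T) x i (gi i)).
  { intros i Hi. apply lnrho_partial; auto; lra. }
  split.
  { exists (gi 0%nat, gi 1%nat, gi 2%nat), (px x / V, py x / V, pz x / V), (2 / V).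
    split; [|split].
    - split; [|split]; apply Hgi; lia.
    - apply vnorm_grad; auto.
    - apply vnorm_lap; auto. }
  intros g df lap Hg Hdf Hlap.
  apply vnorm_grad_uniq in Hdf; auto. apply vnorm_lap_uniq in Hlap; auto. fold V in Hdf, Hlap.
  subst df lap.
  destruct Hg as [G0 [G1 G2]].
  apply (uniqueness_limite _ _ _ _ (Hgi 0%nat ltac:(lia))) in G0.
  apply (uniqueness_limite _ _ _ _ (Hgi 1%nat ltac:(lia))) in G1.
  apply (uniqueness_limite _ _ _ _ (Hgi 2%nat ltac:(lia))) in G2.
  destruct g as [[g0 g1] g2]. cbn [px py pz fst snd] in G0, G1, G2. subst g0 g1 g2.
  assert (HgT : vnorm (D 0%nat x / T x, D 1%nat x / T x, D 2%nat x / T x) < C).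
  { apply (Hgrad x). fold V; lra. split; [|split]; apply lnT_partial; auto; lia. }
  assert (Hcs := CS (D 0%nat x / T x) (D 1%nat x / T x) (D 2%nat x / T x) (px x) (py x) (pz x)).
  change (sqrt ((D 0%nat x / T x) ^ 2 + (D 1%nat x / T x) ^ 2 + (D 2%nat x / T x) ^ 2))
    with (vnorm (D 0%nat x / T x, D 1%nat x / T x, D 2%nat x / T x)) in Hcs.
  change (sqrt (px x ^ 2 + py x ^ 2 + pz x ^ 2)) with V in Hcs.
  assert (HS := sum_Kv mu lam e x Hp Hmu Hlam He HN). unfold coord in HS.
  assert (Sx := vnorm_sq x). fold V in Sx.
  set (nG := vnorm (D 0%nat x / T x, D 1%nat x / T x, D 2%nat x / T x)) in *.
  set (Gs := D 0%nat x / T x * px x + D 1%nat x / T x * py x + D 2%nat x / T x * pz x) in *.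
  set (Ss := px x * Kv mu lam e x 0 + py x * Kv mu lam e x 1 + pz x * Kv mu lam e x 2) in *.
  assert (EGu : Gu_value eps (gi 0%nat, gi 1%nat, gi 2%nat) (px x / V, py x / V, pz x / V) (2 / V)
     = eps ^ 2 * / V + eps ^ 2 / 2 * (Gs / V) + lam / 2 * (Ss / V)
       - mu / lam * ((px x ^ 2 + py x ^ 2 + pz x ^ 2) / (V * V))).
  { unfold Gu_value, gi, Gs, Ss, coord. cbn [px py pz fst snd]. field.
    assert (T x > 0) by apply HTpos. repeat split; lra. }
  rewrite EGu, <- Sx.
  replace ((V * V) / (V * V)) with 1 by (field; lra).
  replace (- (eps ^ 2 * Ct / 2)) with (eps ^ 2 * C / 2 - mu / (2 * lam)) by (unfold Ct; field; lra).
  assert (HiV : 0 < / V) by (apply Rinv_0_lt_compat; lra).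
  assert (A1 : Gs / V <= C).
  { apply Rmult_le_reg_r with V; auto. unfold Rdiv. rewrite Rmult_assoc, Rinv_l, Rmult_1_r by lra.
    nra. }
  assert (A2 : Ss / V <= 4 * / V).
  { unfold Rdiv. apply Rmult_le_compat_r; lra. }
  set (K := 2 * lam * (eps ^ 2 + 2 * lam) / mu) in *.
  assert (A3 : (eps ^ 2 + 2 * lam) * / V <= mu / (2 * lam)).
  { assert (/ V <= / K) by (apply Rinv_le_contravar; lra).
    replace (mu / (2 * lam)) with ((eps ^ 2 + 2 * lam) * / K) by (unfold K; field; repeat split; lra).
    apply Rmult_le_compat_l; lra. }
  assert (B1 : eps ^ 2 / 2 * (Gs / V) <= eps ^ 2 / 2 * C) by (apply Rmult_le_compat_l; lra).
  assert (B2 : lam / 2 * (Ss / V) <= lam / 2 * (4 * / V)) by (apply Rmult_le_compat_l; lra).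
  assert (B3 : mu / lam = 2 * (mu / (2 * lam))) by (field; lra).
  assert (B4 : 0 < mu / (2 * lam) - eps ^ 2 * C / 2).
  { assert (C * (eps ^ 2 * lam) < mu).
    { apply Rmult_lt_reg_r with (/ (eps ^ 2 * lam)). apply Rinv_0_lt_compat; nra.
      rewrite Rmult_assoc, Rinv_r, Rmult_1_r by nra. exact HCb. }
    assert (E : mu / (2 * lam) - eps ^ 2 * C / 2 = (mu - C * (eps ^ 2 * lam)) / (2 * lam)) by (field; lra).
    rewrite E. apply Rdiv_lt_0_compat; lra. }
  split; [|lra].
  assert (E3 : lam / 2 * (4 * / V) = 2 * lam * / V) by (field; lra).
  assert (E4 : (eps ^ 2 + 2 * lam) * / V = eps ^ 2 * / V + 2 * lam * / V) by (field; lra).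
  lra.
Qed.
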